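(* For any $\phi\in\mathrm{Hom}(C(X,\mathbb{Z}),\mathbb{Z})$ with $\phi(1)=0$, there exist a set of horizontal edges $\mathcal H$ (possibly containing several edges between the same pair of vertices, hence possibly bigger than the maximal set) and a choice function $\tau$ such that $\varphi_{\tau,\mathcal H}=\phi$.
   Context: Let $(X,d)$ be an infinite compact ultrametric space, identified with the boundary $\partial\mathcal{T}$ (infinite paths from the root) of its Michon tree $\mathcal{T}=(\mathcal{T}^{(0)},\mathcal{T}^{(1)})$; $K_0(C(X))\cong C(X,\mathbb{Z})$, spanned by the indicator functions $\chi_v$ of the sets of paths through vertices $v$. For a vertex $v$ of level $n$, $\mathcal{T}^{(0)}(v)$ denotes its successors at level $n+1$; horizontal edges of level $n+1$ join distinct vertices of some $\mathcal{T}^{(0)}(v)$. A choice function $\tau:\mathcal{T}^{(0)}\to\partial\mathcal{T}$ satisfies: $\tau(v)$ passes through $v$, and if $w\prec v$ then $\tau(w)=\tau(v)$ iff $\tau(w)$ passes through $v$. Given an oriented set of horizontal edges $\mathcal H=\mathcal H^+\cup\mathcal H^-$ and $\tau$, the even Fredholm module on $\ell^2(\mathcal H^+)\oplus\ell^2(\mathcal H^-)$ with representation $\pi_\tau(f)\psi(h)=f(\tau(s(h)))\psi(h)$ and $F$ having off-diagonal part $T1_h=1_{h^{\mathrm{op}}}$ defines via the Connes pairing the homomorphism $\varphi_{\tau,\mathcal H}:C(X,\mathbb{Z})\to\mathbb{Z}$, $\varphi_{\tau,\mathcal H}(\chi_v)=\sum_{h\in\mathcal H^+}\big(\chi_v(\tau(s(h)))-\chi_v(\tau(r(h)))\big)$.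 One always has $\varphi_{\tau,\mathcal H}(1)=0$. *)

(* Defs.v *)
From HB Require Import structures.
From mathcomp Require Import all_boot all_order all_algebra.
From mathcomp Require Import all_classical all_reals.
From mathcomp Require Import numfun.
Set Implicit Arguments. Unset Strict Implicit. Unset Printing Implicit Defensive.
Import Order.TTheory GRing.Theory Num.Theory.
Local Open Scope classical_set_scope.
Local Open Scope ring_scope.

Section Michon.
Context {R : realType} {X : Type} (d : X -> X -> R).

Definition ultrametric : Prop :=
  [/\ forall x y, 0 <= d x y,
      forall x y, d x y = 0 <-> x = y,
      forall x y, d x y = d y x &
      forall x y z, d x z <= Num.max (d x y) (d y z)].

Definition seq_compact : Prop :=
  forall u : nat -> X, exists (phi : nat -> nat) (x : X),
    (forall n, (phi n < phi n.+1)%N) /\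
    forall e : R, 0 < e -> exists N, forall n, (N <= n)%N -> d (u (phi n)) x < e.

Definition infinite_space : Prop := exists f : nat -> X, injective f.

Definition compact_ultrametric_space : Prop :=
  [/\ ultrametric, seq_compact & infinite_space].

(** the set of nonzero distances, and its decreasing enumeration
    r_0 > r_1 > r_2 > ... (r_0 = diam X) *)
Definition dist_set : set R := [set t | exists x y, x <> y /\ t = d x y].

Fixpoint radius (n : nat) : R :=
  match n with
  | 0 => sup dist_set
  | n.+1 => sup [set t | dist_set t /\ t < radius n]
  end.

(** Michon tree: the vertices of level n are the balls
    {y | d x y < r_(n-1)} (level 0 = the root X). *)
Definition ball_at (n : nat) (x : X) : set X :=
  [set y | forall k, (k < n)%N -> d x y < radius k].

Definition is_vertex (n : nat) (B : set X) : Prop := exists x, B = ball_at n x.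

Record vertex := Vertex { lvl : nat; vball : set X; vertexP : is_vertex lvl vball }.

(** an infinite path (a point of X = boundary of the tree) passes through v *)
Definition passes (x : X) (v : vertex) : Prop := vball v x.

Definition chi (v : vertex) : X -> int := \1_(vball v).

Definition prec (w v : vertex) : Prop := (lvl w < lvl v)%N /\ vball v `<=` vball w.

Definition succ (v w : vertex) : Prop := lvl w = (lvl v).+1 /\ vball w `<=` vball v.

Definition horizontal (a b : vertex) : Prop := exists v, [/\ succ v a, succ v b & a <> b].

Definition choice_function (tau : vertex -> X) : Prop :=
  (forall v, passes (tau v) v) /\
  (forall w v, prec w v -> (tau w = tau v <-> passes (tau w) v)).

(** C(X,Z) : continuous (= locally constant) integer valued functions *)
Definition CXZ (f : X -> int) : Prop :=
  forall x, exists2 e : R, 0 < e & forall y, d x y < e -> f y = f x.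

Definition is_hom (phi : (X -> int) -> int) : Prop :=
  forall f g, CXZ f -> CXZ g -> phi (f \+ g) = phi f + phi g.

(** the homomorphism phi_(tau,H) on the generators chi_v, where
    H^+ is the family (s e, r e)_(e : E) of oriented horizontal edges *)
Definition phi_tauH (E : choiceType) (s r : E -> vertex) (tau : vertex -> X)
    (v : vertex) : int :=
  \sum_(e \in [set: E]) (chi v (tau (s e)) - chi v (tau (r e))).

End Michon.

(* Main.v *)
Require Import Defs.
From HB Require Import structures.
From mathcomp Require Import all_boot all_order all_algebra.
From mathcomp Require Import all_classical all_reals numfun.
Import Order.TTheory GRing.Theory Num.Theory.
Local Open Scope classical_set_scope.
Local Open Scope ring_scope.

Section Basics.
Variables (R : realType) (X : Type) (d : X -> X -> R).
Hypothesis HX : compact_ultrametric_space d.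

Lemma d_ge0 x y : 0 <= d x y. Proof. by case: HX => -[]. Qed.
Lemma d_sym x y : d x y = d y x. Proof. by case: HX => -[]. Qed.
Lemma d_eq0 x y : d x y = 0 <-> x = y. Proof. by case: HX => -[]. Qed.
Lemma d_ultra x y z : d x z <= Num.max (d x y) (d y z). Proof. by case: HX => -[]. Qed.
Lemma d_xx x : d x x = 0. Proof. by apply/d_eq0. Qed.

Lemma dpos {x y} : x <> y -> 0 < d x y.
Proof. by move=> nxy; rewrite lt_neqAle d_ge0 andbT eq_sym; apply/eqP => /d_eq0. Qed.

Lemma ultra {x y z r} : d x y < r -> d y z < r -> d x z < r.
Proof. by move=> h1 h2; apply: le_lt_trans (d_ultra x y z) _; rewrite gt_max h1 h2. Qed.

Lemma incr_ge (phi : nat -> nat) : (forall n, (phi n < phi n.+1)%N) -> forall n, (n <= phi n)%N.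
Proof. move=> h; elim=> [//|n IH]; exact: leq_ltn_trans IH (h n). Qed.

Lemma small e : 0 < e -> exists x y, x <> y /\ d x y < e.
Proof.
move=> e0; case: HX => _ HC [f finj].
have [phi [x [phiinc Hc]]] := HC f.
have [N HN] := Hc e e0.
exists (f (phi N)), (f (phi N.+1)); split.
  move=> /finj eq; have := phiinc N; by rewrite eq ltnn.
apply: (@ultra _ x); first exact: HN.
by rewrite d_sym; apply: HN.
Qed.

Lemma bounded : exists M, forall x y, d x y <= M.
Proof.
case: HX => _ HC [f finj].
apply: contrapT => hnb.
have hb : forall n : nat, exists u, n%:R < d (f 0%N) u.
  move=> n; apply: contrapT => hn.
  apply: hnb; exists (n%:R) => x y.
  apply: le_trans (d_ultra x (f 0%N) y) _; rewrite ge_max; apply/andP; split.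
    rewrite d_sym leNgt; apply/negP => h; apply: hn; by exists x.
  rewrite leNgt; apply/negP => h; apply: hn; by exists y.
have [u Hu] := choice hb.
have [phi [x [phiinc Hc]]] := HC u.
have [N HN] := Hc 1 ltr01.
set K := Num.Def.archi_bound (d (f 0%N) x + 1).
have hK : d (f 0%N) x + 1 < K%:R by apply: archi_boundP; rewrite addr_ge0 // d_ge0.
set n0 := maxn N K.
have h1 := HN n0 (leq_maxl _ _).
have h2 := Hu (phi n0).
have : d (f 0%N) (u (phi n0)) < d (f 0%N) x + 1.
  apply: le_lt_trans (d_ultra _ x _) _; rewrite gt_max; apply/andP; split.
    by rewrite ltrDl ltr01.
  by rewrite d_sym; apply: lt_le_trans h1 _; rewrite lerDr d_ge0.
move=> h3.
have : (K <= phi n0)%N by apply: (@leq_trans n0); [exact: leq_maxr | exact: incr_ge].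
rewrite -(ler_nat R) => hK2.
have := lt_trans (lt_le_trans hK hK2) h2.
by rewrite ltNge (ltW h3).
Qed.

Definition Sn n := [set t | dist_set d t /\ t < radius d n].

Lemma Sn_ne n : 0 < radius d n -> exists t, Sn n t /\ 0 < t.
Proof.
move=> h; have [x [y [nxy hxy]]] := small (radius d n) h.
by exists (d x y); split; [split=> //; exists x, y | exact: dpos].
Qed.

Lemma hub S : S `<=` dist_set d -> has_ubound S.
Proof. move=> hS; have [M HM] := bounded; exists M => t /hS [x [y [_ ->]]]; exact: HM. Qed.

Lemma rpos n : 0 < radius d n.
Proof.
elim: n => [|n IH].
- case: HX => _ _ [f finj].
  have neq : f 0%N <> f 1%N by move=> /finj.
  have ht : dist_set d (d (f 0%N) (f 1%N)) by exists (f 0%N), (f 1%N).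
  apply: lt_le_trans (dpos neq) _; apply: sup_upper_bound => //.
  by split; [exists (d (f 0%N) (f 1%N)) | apply: hub].
- have [t [ht t0]] := Sn_ne n IH.
  apply: lt_le_trans t0 _; apply: sup_upper_bound => //.
  by split; [exists t | apply: hub => u []].
Qed.

Lemma rmono n : radius d n.+1 <= radius d n.
Proof.
have [t [ht t0]] := Sn_ne n (rpos n).
apply: ge_sup; first by exists t.
by move=> u [_ /ltW].
Qed.

Lemma rmono' k n : (k <= n)%N -> radius d n <= radius d k.
Proof.
elim: n => [|n IH]; first by rewrite leqn0 => /eqP ->.
rewrite leq_eqVlt => /orP[/eqP -> //|]; rewrite ltnS => /IH h.
exact: le_trans (rmono n) h.
Qed.


Local Notation B := (ball_at d).

Lemma B_refl n x : B n x x.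
Proof. by move=> k _; rewrite d_xx rpos. Qed.
Lemma B_sym {n x y} : B n x y -> B n y x.
Proof. by move=> h k hk; rewrite d_sym; apply: h. Qed.
Lemma B_trans {n x y z} : B n x y -> B n y z -> B n x z.
Proof. by move=> h1 h2 k hk; apply: (@ultra _ y); [apply: h1|apply: h2]. Qed.
Lemma B_mono {m n x y} : (m <= n)%N -> B n x y -> B m x y.
Proof. by move=> hmn h k hk; apply: h; exact: leq_trans hk hmn. Qed.
Lemma B_eq {n x y} : B n x y -> B n x = B n y.
Proof.
move=> h; apply/funext => z; apply/propext; split => hz.
  exact: B_trans (B_sym h) hz.
exact: B_trans h hz.
Qed.
Lemma B_succ {n x y} : B n x y -> d x y < radius d n -> B n.+1 x y.
Proof.
move=> h hd k; rewrite ltnS leq_eqVlt => /orP[/eqP -> //|hk]; exact: h.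
Qed.

Definition V n x : vertex d := @Vertex _ _ d n (B n x) (ex_intro _ x erefl).

Lemma vertex_ext (v w : vertex d) : lvl v = lvl w -> vball v = vball w -> v = w.
Proof.
case: v => n1 b1 p1; case: w => n2 b2 p2 /= e1 e2; subst.
by rewrite (Prop_irrelevance p1 p2).
Qed.

Variable x0 : X.
Definition pt (A : set X) : X :=
  if pselect (exists x, A x) is left h then projT1 (cid h) else x0.
Lemma pt_in (A : set X) a : A a -> A (pt A).
Proof.
move=> ha; rewrite /pt; case: pselect => [h|[]]; last by exists a.
exact: projT2 (cid h).
Qed.

Lemma vertex_rep v : vball v (pt (vball v)) /\ v = V (lvl v) (pt (vball v)).
Proof.
case: (vertexP v) => x e.
have hx : vball v (pt (vball v)) by rewrite e; apply: (@pt_in (B _ x) x); exact: B_refl.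
split => //; apply: vertex_ext => //=; rewrite e; apply: B_eq; by rewrite -e.
Qed.

Lemma vertex_in {v x} : vball v x -> v = V (lvl v) x.
Proof.
move=> h2; case: (vertex_rep v) => _ e.
have vb : vball v = B (lvl v) (pt (vball v)) by rewrite {1}e.
apply: vertex_ext => //=; rewrite vb; apply: B_eq; by rewrite -vb.
Qed.

Lemma V_eq n x y : V n x = V n y <-> B n x y.
Proof.
split=> [e|h]; last by apply: vertex_ext => //=; exact: B_eq.
have : vball (V n y) y by exact: B_refl.
by rewrite -e.
Qed.

Lemma chi1 {v : vertex d} {y : X} : vball v y -> chi v y = 1.
Proof. by move=> h; rewrite /chi indicE mem_set. Qed.
Lemma chi0 {v : vertex d} {y : X} : ~ vball v y -> chi v y = 0.
Proof. by move=> h; rewrite /chi indicE memNset. Qed.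

Fixpoint T n x : X :=
  match n with
  | 0 => x0
  | n'.+1 => if pselect (B n'.+1 x (T n' x)) then T n' x else pt (B n'.+1 x)
  end.

Lemma T_in n x : B n x (T n x).
Proof.
case: n => [|n] /=; first by move=> k.
destruct pselect as [h|h] => //; apply: (@pt_in _ x); exact: B_refl.
Qed.

Lemma T_inv {n x y} : B n x y -> T n y = T n x.
Proof.
elim: n x y => [//|n IH] x y h /=.
rewrite (IH x y (B_mono (leqnSn n) h)) (B_eq h).
by [].
Qed.

Lemma T_stable {k m y} : (k <= m)%N -> B m y (T k y) -> T m y = T k y.
Proof.
move=> + h; elim: m h => [|m IH] h.
  by rewrite leqn0 => /eqP ->.
rewrite leq_eqVlt => /orP[/eqP -> //|]; rewrite ltnS => hk.
have e := IH (B_mono (leqnSn m) h) hk.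
rewrite /= -e; destruct pselect as [h'|h'] => //; exfalso; apply: h'; by rewrite e.
Qed.

Definition tau (v : vertex d) : X := T (lvl v) (pt (vball v)).

Lemma tau_V n x : tau (V n x) = T n x.
Proof. rewrite /tau /=; apply: T_inv; apply: (@pt_in _ x); exact: B_refl. Qed.

Lemma tau_choice : choice_function tau.
Proof.
split.
  move=> v; rewrite /passes /tau; case: (vertex_rep v) => h1 e.
  have vb : vball v = B (lvl v) (pt (vball v)) by rewrite {1}e.
  rewrite {1}vb; exact: T_in.
move=> w v [hl hs].
case: (vertex_rep v) => h1 ev.
set y := pt (vball v) in h1 ev.
have ew := vertex_in (hs _ h1).
rewrite ev ew !tau_V /passes /=.
split => [e|h]; first by rewrite e; exact: T_in.
by rewrite (T_stable (ltnW hl) h).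
Qed.


Definition cvalid n y k (c : nat -> X) :=
  (forall i, (i < k)%N -> B n y (c i)) /\
  (forall i j, (i < k)%N -> (j < k)%N -> B n.+1 (c i) (c j) -> i = j).

Lemma children n y : exists (k : nat) (c : nat -> X), cvalid n y k c /\
  (forall z, B n y z -> exists2 i, (i < k)%N & B n.+1 (c i) z).
Proof.
apply: contrapT => H.
have H' : forall p : nat * (nat -> X), exists z, cvalid n y p.1 p.2 ->
    B n y z /\ forall i, (i < p.1)%N -> ~ B n.+1 (p.2 i) z.
  move=> [k c] /=; case: (pselect (cvalid n y k c)) => hv; last by exists y.
  apply: contrapT => hz; apply: H; exists k, c; split => // z hz'.
  apply: contrapT => hnz; apply: hz; exists z => _; split => // i hi hb.
  by apply: hnz; exists i.
have [Z HZ] := choice H'.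
pose fix pre k : nat -> X := match k with
  | 0 => fun _ => y
  | k'.+1 => fun i => if (i < k')%N then pre k' i else Z (k', pre k') end.
have pre_ok : forall k, cvalid n y k (pre k).
  elim=> [|k [IH1 IH2]]; first by split.
  have [hz1 hz2] := HZ (k, pre k) (conj IH1 IH2).
  split=> [i|i j]; rewrite /= ?ltnS.
    by case: ifP => [hik _|]; [apply: IH1|].
  case: (ltnP i k) => hik; case: (ltnP j k) => hjk hi hj.
  - exact: IH2.
  - have -> : j = k by apply/eqP; rewrite eqn_leq hj.
    by move=> /(hz2 _ hik).
  - have -> : i = k by apply/eqP; rewrite eqn_leq hi.
    by move=> /B_sym /(hz2 _ hjk).
  - by move=> _; apply/eqP; rewrite eqn_leq (leq_trans hi hjk) (leq_trans hj hik).
have pre_st : forall k i, (i < k)%N -> pre k i = pre i.+1 i.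
  elim=> [//|k IH] i; rewrite ltnS leq_eqVlt => /orP[/eqP ->|hik] /=.
    by rewrite ltnn.
  by rewrite hik IH.
pose u i := pre i.+1 i.
have uin : forall i, B n y (u i) by move=> i; apply: (pre_ok i.+1).1.
have udis : forall i j, (i < j)%N -> ~ B n.+1 (u i) (u j).
  move=> i j hij hb.
  have := (pre_ok j.+1).2 i j (leq_trans hij (leqnSn j)) (ltnSn j).
  rewrite /u -(pre_st j.+1 i (leq_trans hij (leqnSn j))) in hb.
  by move=> /(_ hb) e; move: hij; rewrite e ltnn.
case: HX => _ HC _.
have [phi [x [phiinc Hc]]] := HC u.
have [N HN] := Hc _ (rpos n).
apply: (udis _ _ (phiinc N)); apply: B_succ.
  exact: B_trans (B_sym (uin _)) (uin _).
by apply: (@ultra _ x); [apply: HN | rewrite d_sym; apply: HN].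
Qed.


Lemma vball_rep (v : vertex d) : vball v = B (lvl v) (pt (vball v)).
Proof. by case: (vertex_rep v) => _ e; rewrite {1}e. Qed.

Lemma CXZ_chi (v : vertex d) : CXZ d (chi v).
Proof.
rewrite /CXZ; set y := pt (vball v); set n := lvl v.
have vb : vball v = B n y by exact: vball_rep.
move=> z; exists (radius d n); first exact: rpos.
move=> w hzw.
have hB : B n z w by move=> k hk; apply: lt_le_trans hzw _; apply: rmono'; exact: ltnW.
case: (pselect (B n y z)) => h.
  rewrite !chi1 // vb //; exact: B_trans h hB.
rewrite !chi0 // vb // => h'; apply: h; exact: B_trans h' (B_sym hB).
Qed.

Lemma CXZ_cst (c : int) : CXZ d (fun _ => c).
Proof. by move=> x; exists 1. Qed.

Lemma CXZ_add f g : CXZ d f -> CXZ d g -> CXZ d (f \+ g).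
Proof.
move=> hf hg x; have [e1 e10 h1] := hf x; have [e2 e20 h2] := hg x.
exists (Num.min e1 e2); first by rewrite lt_min e10 e20.
move=> y; rewrite lt_min => /andP[y1 y2] /=; by rewrite h1 // h2.
Qed.

Lemma CXZ_sum k (f : nat -> X -> int) : (forall i, CXZ d (f i)) ->
  CXZ d (fun z => \sum_(i < k) f i z).
Proof.
move=> hf; elim: k => [|k IH].
  by under eq_fun do rewrite big_ord0; exact: CXZ_cst.
have -> : (fun z => \sum_(i < k.+1) f i z) = (fun z => \sum_(i < k) f i z) \+ f k.
  by apply/funext => z; rewrite big_ord_recr.
exact: CXZ_add.
Qed.

Variable phi : (X -> int) -> int.
Hypothesis Hphi : is_hom d phi.

Lemma phi0 : phi (fun _ => 0) = 0.
Proof.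
have := Hphi _ _ (CXZ_cst 0) (CXZ_cst 0).
have -> : (fun _ : X => 0 : int) \+ (fun _ => 0) = (fun _ => 0) by apply/funext => z /=; rewrite addr0.
move=> h; have := congr1 (fun t => t - phi (fun _ => 0)) h; by rewrite /= subrr addrK => <-.
Qed.

Lemma phi_sum k (f : nat -> X -> int) : (forall i, CXZ d (f i)) ->
  phi (fun z => \sum_(i < k) f i z) = \sum_(i < k) phi (f i).
Proof.
move=> hf; elim: k => [|k IH].
  by rewrite big_ord0; under eq_fun do rewrite big_ord0; exact: phi0.
have -> : (fun z => \sum_(i < k.+1) f i z) = (fun z => \sum_(i < k) f i z) \+ f k.
  by apply/funext => z; rewrite big_ord_recr.
by rewrite Hphi ?IH ?big_ord_recr //; exact: CXZ_sum.
Qed.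

Lemma a_children n y k c : cvalid n y k c ->
  (forall z, B n y z -> exists2 i, (i < k)%N & B n.+1 (c i) z) ->
  phi (chi (V n y)) = \sum_(i < k) phi (chi (V n.+1 (c i))).
Proof.
move=> [hin hdis] hcov.
rewrite -(phi_sum k (fun i => chi (V n.+1 (c i)))); last by move=> i; exact: CXZ_chi.
congr phi; apply/funext => z.
case: (pselect (B n y z)) => hz.
  rewrite chi1 //; have [i0 hi0 hb] := hcov z hz.
  rewrite (bigD1 (Ordinal hi0)) //= chi1 // big1 ?addr0 // => j hj.
  apply: chi0 => /= hb'; move: hj; rewrite -val_eqE /=; apply/negP; rewrite negbK.
  apply/eqP; apply: hdis => //; exact: B_trans hb' (B_sym hb).
rewrite chi0 // big1 // => j _; apply: chi0 => /= hb; apply: hz.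
exact: B_trans (hin _ (ltn_ord j)) (B_mono (leqnSn n) hb).
Qed.


Hypothesis Hphi1 : phi (fun _ => 1) = 0.

Definition a (v : vertex d) : int := phi (chi v).
Definition w0 (w : vertex d) : vertex d := V (lvl w) (T (lvl w).-1 (pt (vball w))).
Definition valid (w : vertex d) : bool := (0 < lvl w)%N && `[< w <> w0 w >].
Definition mult (w : vertex d) : nat := if valid w then `|a w|%N else 0.
Definition VN := ({classic vertex d} * nat)%type.
Definition E := {p : VN | (p.2 < mult p.1)%N}.
Definition s' (w : vertex d) := if 0 < a w then w else w0 w.
Definition r' (w : vertex d) := if 0 < a w then w0 w else w.
Definition sE (e : E) := s' (val e).1.
Definition rE (e : E) := r' (val e).1.

Lemma horiz_w0 {w} : valid w -> horizontal w (w0 w) /\ horizontal (w0 w) w.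
Proof.
move=> /andP[hl /asboolP hne].
set y := pt (vball w).
have vb : vball w = B (lvl w) y by exact: vball_rep.
case E1 : (lvl w) hl => [//|n] _.
have sP : succ (V n y) w.
  split => //; rewrite vb E1 => z hz /=; exact: B_mono (leqnSn n) hz.
have sP0 : succ (V n y) (w0 w).
  rewrite /w0 E1 /=; split => // z hz /=.
  apply: B_trans (T_in n y) _; exact: B_mono (leqnSn n) hz.
by split; exists (V n y); split => // /esym.
Qed.

Lemma horizE (e : E) : horizontal (sE e) (rE e).
Proof.
case: e => [[w j] hj] /=.
have hv : valid w by move: hj; rewrite /mult; case: (valid w).
rewrite /sE /rE /s' /r' /=; have [h1 h2] := horiz_w0 hv.
by case: ifP.
Qed.


Lemma mulrn_abs (x a : int) : x *+ `|a|%N = `|a| * x.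
Proof. by rewrite -mulr_natl natz abszE. Qed.

Lemma lvl_V n x : lvl (V n x) = n. Proof. by []. Qed.

Lemma TT n z : T n.+1 (T n z) = T n z.
Proof.
rewrite /=; have e : T n (T n z) = T n z by apply: T_inv; exact: T_in.
rewrite e; destruct pselect as [h|h] => //; exfalso; apply: h; exact: B_refl.
Qed.

Lemma tau_w0 n z : tau (V n.+1 (T n z)) = T n z.
Proof. by rewrite tau_V TT. Qed.

Lemma w0_V n z : w0 (V n.+1 z) = V n.+1 (T n z).
Proof.
rewrite /w0 /=; congr V; apply: T_inv.
apply: (B_mono (leqnSn n)); apply: (@pt_in (B n.+1 z) z); exact: B_refl.
Qed.

Lemma chi_same m y n z p q : B n z p -> B n z q -> ((m <= n)%N \/ ~ B n y z) ->
  chi (V m y) p = chi (V m y) q.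
Proof.
move=> hp hq H.
case: (leqP m n) => hmn.
  have hp' := B_mono hmn hp; have hq' := B_mono hmn hq.
  case: (pselect (B m y z)) => h.
    rewrite !chi1 //=; [exact: B_trans h hq' | exact: B_trans h hp'].
  rewrite !chi0 //= => h'; apply: h.
    exact: B_trans h' (B_sym hq').
  exact: B_trans h' (B_sym hp').
case: H => [h|hn]; first by move: hmn; rewrite ltnNge h.
have hnm := ltnW hmn.
rewrite !chi0 //= => h; apply: hn.
  exact: B_trans (B_mono hnm h) (B_sym hq).
exact: B_trans (B_mono hnm h) (B_sym hp).
Qed.


Section Main.
Variables (m : nat) (y : X).
Definition g (u : vertex d) := chi (V m y) (tau u).
Definition F' (p : VN) : int := g (s' p.1) - g (r' p.1).

Lemma F'_zero (w : vertex d) j : valid w ->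
  ~ (exists n, [/\ lvl w = n.+1, (n < m)%N & B n y (pt (vball w))]) -> F' (w, j) = 0.
Proof.
move=> hv hne; have hl := (andP hv).1.
have hgw : g (w0 w) = g w.
  rewrite /g /w0; case E1: (lvl w) hl => [//|n] _ /=.
  rewrite tau_w0 /tau E1.
  apply: (chi_same m y n (pt (vball w))).
  - exact: T_in.
  - exact: B_mono (leqnSn n) (T_in n.+1 _).
  - case: (leqP m n) => h; first by left.
    right => hb; apply: hne; exists n; split => //.
rewrite /F' /s' /r' /=; by case: ifP => _; rewrite hgw subrr.
Qed.

Lemma inner_sum (w : vertex d) : (0 < lvl w)%N ->
  F' (w, 0%N) *+ mult w = a w * (g w - g (w0 w)).
Proof.
move=> hl; rewrite /mult /valid hl /=.
case: (pselect (w <> w0 w)) => h.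
  have -> : `[< w <> w0 w >] = true by apply/asboolP.
  rewrite mulrn_abs /F' /s' /r' /=.
  case: (ltrgt0P (a w)) => ha.
  - by [].
  - by rewrite mulNr -mulrN opprB.
  - by rewrite ha !mul0r.
have -> : `[< w <> w0 w >] = false by apply/negbTE/asboolPn.
have e : w = w0 w by apply: contrapT.
by rewrite /= -e subrr mulr0.
Qed.



Lemma sum_pmap (T0 : eqType) (P : pred T0) (sT : subType P) (s : seq T0) (G : T0 -> int) :
  \sum_(e <- pmap (insub : T0 -> option sT) s) G (val e) = \sum_(p <- s | P p) G p.
Proof.
elim: s => [|x s IH]; first by rewrite !big_nil.
rewrite big_cons /=; case: insubP => [u Pu ex|nP] /=.
  by rewrite big_cons IH ex Pu.
by rewrite -IH (negbTE nP).
Qed.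

Lemma aV0 z : a (V 0 z) = 0.
Proof. rewrite /a -Hphi1; congr phi; apply/funext => t; exact: chi1. Qed.

Lemma main_sum : phi (chi (V m y)) = \sum_(e \in [set: E]) (g (sE e) - g (rE e)) /\
   finite_set [set e : E | g (sE e) <> g (rE e)].
Proof.
have hch : forall n, exists p : nat * (nat -> X), cvalid n y p.1 p.2 /\
    (forall z, B n y z -> exists2 i, (i < p.1)%N & B n.+1 (p.2 i) z).
  by move=> n; have [k [c h]] := children n y; exists (k, c).
have [KC HKC] := choice hch.
pose K n := (KC n).1. pose C n := (KC n).2.
pose Lw n : seq {classic vertex d} :=
  [seq (V n.+1 (C n i) : {classic vertex d}) | i <- index_iota 0 (K n)].
pose Ln n : seq VN := [seq ((w, j) : VN) | w <- Lw n, j <- index_iota 0 (mult w)].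
pose L : seq VN := [seq p | n <- index_iota 0 m, p <- Ln n].
pose l : seq E := pmap insub L.
have lvlLw : forall n (w : {classic vertex d}), w \in Lw n -> lvl w = n.+1.
  by move=> n w /mapP [i _ ->].
have lvlLn : forall n p, p \in Ln n -> lvl p.1 = n.+1.
  by move=> n p /allpairsPdep [w [j [hw _ ->]]] /=; apply: lvlLw hw.
have memL : forall e : E, F' (val e) <> 0 -> e \in l.
  case=> [[w j] hj] /= hF; rewrite mem_pmap_sub /=.
  have hv : valid w by move: hj; rewrite /mult; case: (valid w).
  have [n [hl hn hb]] : exists n, [/\ lvl w = n.+1, (n < m)%N & B n y (pt (vball w))].
    by apply: contrapT => hne; apply: hF; apply: F'_zero.
  have [_ hcov] := HKC n; have [i hi hbi] := hcov _ hb.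
  have ew : w = V n.+1 (C n i).
    rewrite (vertex_in (vertex_rep w).1) hl; apply/V_eq; exact: B_sym hbi.
  apply/allpairsPdep; exists n, (w, j); split => //.
    by rewrite mem_index_iota.
  apply/allpairsPdep; exists w, j; split => //.
    by rewrite ew; apply: map_f; rewrite mem_index_iota.
  by rewrite mem_index_iota.
have uLw : forall n, uniq (Lw n).
  move=> n; rewrite map_inj_in_uniq ?iota_uniq // => i j.
  rewrite !mem_index_iota => /andP[_ hi] /andP[_ hj] /V_eq h.
  exact: (HKC n).1.2 i j hi hj h.
have uLn : forall n, uniq (Ln n).
  move=> n; apply: allpairs_uniq_dep => //.
  - move=> w _; exact: iota_uniq.
  - by move=> [w1 j1] [w2 j2] _ _ /= [e1 e2]; subst.
have uL : uniq L.
  apply: allpairs_uniq_dep; first exact: iota_uniq.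
    by move=> n _; exact: uLn.
  move=> [n1 p1] [n2 p2] h1 h2 /= e; subst p2.
  move/allpairsPdep: h1 => [x1 [y1 [_ hy1 e1]]].
  move/allpairsPdep: h2 => [x2 [y2 [_ hy2 e2]]].
  case: e1 => ??; subst; case: e2 => ??; subst.
  have := lvlLn _ _ hy1; rewrite (lvlLn _ _ hy2) => -[->] //.
have ul : uniq l by exact: pmap_sub_uniq.
split; last first.
  apply: (sub_finite_set _ (finite_seq l)) => e /= he; apply: memL => h.
  by apply: he; apply/eqP; rewrite -subr_eq0; apply/eqP.
rewrite (fsbigE l) //; last first.
  move=> e _ he; apply: contrapT => h; move: he; by rewrite memL.
under eq_bigl do rewrite in_setT.
have -> : \sum_(i <- l) (g (sE i) - g (rE i)) = \sum_(i <- l) F' (val i) by [].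
rewrite (sum_pmap _ _ _ L F').
have PL : forall p, p \in L -> (p.2 < mult p.1)%N.
  move=> p /allpairsPdep [n [q [_ hq ->]]].
  move/allpairsPdep: hq => [w [j [_ hj ->]]] /=.
  by move: hj; rewrite mem_index_iota.
have -> : \sum_(p <- L | (p.2 < mult p.1)%N) F' p = \sum_(p <- L) F' p.
  rewrite big_seq_cond [RHS]big_seq; apply: eq_bigl => p.
  by case hp: (p \in L) => //=; rewrite PL.
rewrite big_allpairs_dep /=.
pose h k := a (V k y) * chi (V m y) (T k y).
have step : forall n, (n < m)%N ->
    \sum_(p <- Ln n) F' p = h n.+1 - h n.
  move=> n hn; have [hcv hcov] := HKC n; have [hin hdis] := hcv.
  rewrite /Ln big_allpairs_dep /=.
  rewrite (eq_big_seq (fun w : {classic vertex d} => a w * (g w - g (w0 w)))); last first.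
    move=> w hw.
    have -> : \sum_(j <- index_iota 0 (mult w)) F' (w, j) =
              \sum_(j <- index_iota 0 (mult w)) F' (w, 0%N) by [].
    rewrite sumr_const_nat subn0; apply: inner_sum; by rewrite (lvlLw _ _ hw).
  rewrite /Lw big_map.
  rewrite (eq_big_seq (fun i => a (V n.+1 (C n i)) * g (V n.+1 (C n i)) -
      a (V n.+1 (C n i)) * chi (V m y) (T n y))); last first.
    move=> i; rewrite mem_index_iota => /andP[_ hi].
    by rewrite w0_V (T_inv (hin i hi)) [g (V _ (T _ _))]/g tau_w0 mulrBr.
  have hA : \sum_(0 <= i < K n) a (V n.+1 (C n i)) = a (V n y).
    by rewrite big_mkord /a (a_children n y _ _ hcv hcov).
  have hB : \sum_(0 <= i < K n) a (V n.+1 (C n i)) * g (V n.+1 (C n i)) =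
      a (V n.+1 y) * chi (V m y) (T n.+1 y).
    have [i1 hi1 hb1] := hcov y (B_refl n y).
    rewrite big_mkord (bigD1 (Ordinal hi1)) //= big1 ?addr0.
      have -> : V n.+1 (C n i1) = V n.+1 y by apply/V_eq.
      by rewrite /g tau_V.
    move=> j hj; rewrite /g tau_V chi0 ?mulr0 //= => hB'.
    have hjy : B n.+1 (C n j) y.
      have h1 : B n.+1 y (T n.+1 (C n j)) := B_mono hn hB'.
      exact: B_trans (T_in _ _) (B_sym h1).
    move: hj; rewrite -val_eqE /= => /negP; apply; apply/eqP.
    apply: hdis (ltn_ord j) hi1 _; exact: B_trans hjy (B_sym hb1).
  by rewrite sumrB -big_distrl /= hA hB.
rewrite (eq_big_seq (fun n => h n.+1 - h n)); last first.
  by move=> n; rewrite mem_index_iota => /andP[_ hn]; apply: step.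
rewrite telescope_sumr // /h aV0 mul0r subr0 chi1 ?mulr1 //; exact: T_in.
Qed.
End Main.
End Basics.

Theorem proposition7p3 (R : realType) (X : Type) (d : X -> X -> R)
  (HX : compact_ultrametric_space d)
  (phi : (X -> int) -> int) (Hphi : is_hom d phi) (Hphi1 : phi (fun _ => 1) = 0) :
  exists (E : choiceType) (s r : E -> vertex d) (tau : vertex d -> X),
    [/\ choice_function tau,
        (forall e, horizontal (s e) (r e)),
        (forall v : vertex d, finite_set [set e | chi v (tau (s e)) <> chi v (tau (r e))]) &
        (forall v : vertex d, phi (chi v) = phi_tauH s r tau v)].
Proof.
have HX' := HX; case: HX' => _ _ [f _]; set x0 := f 0%N.
exists (E R X d x0 phi : choiceType), (sE R X d x0 phi), (rE R X d x0 phi), (tau R X d x0).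
split.
- exact: tau_choice.
- exact: horizE.
- move=> v; rewrite (vertex_rep _ _ _ HX x0 v).2.
  exact: (main_sum _ _ _ HX x0 _ Hphi Hphi1 _ _).2.
- move=> v; rewrite (vertex_rep _ _ _ HX x0 v).2.
  exact: (main_sum _ _ _ HX x0 _ Hphi Hphi1 _ _).1.
Qed.
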